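(* Let $n\geq2$, $\sigma>0$ and $x_0\in(0,\infty)$, and let $u$ be the solution of the initial value problem $$u''=\Big[\frac{x}{2}u'+\frac{n-1}{u}-\frac{u}{2}\Big]\big(1+(u')^2\big),\qquad u(x_0)=\sigma x_0,\qquad u'(x_0)\geq\sigma,$$ maximally extended to the right on an interval $(x_0,x_\infty)$ (with $u>0$). Then $x_\infty<\infty$, and if $u(x_0)\geq\sqrt{2(n-1)}$, then $x_\infty\leq\big(1+\frac{1}{n-1}\big)x_0$. *)

(* Defs.v *)
From Stdlib Require Import Reals.
From Coquelicot Require Import Coquelicot.
Open Scope R_scope.

Definition ode_rhs (n : nat) (x u du : R) : R :=
  (x / 2 * du + (INR n - 1) / u - u / 2) * (1 + du ^ 2).

Definition is_sol (n : nat) (sigma x0 : R) (X : Rbar) (u : R -> R) : Prop :=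
  Rbar_lt x0 X /\
  u x0 = sigma * x0 /\
  Derive u x0 >= sigma /\
  (forall x, x0 <= x -> Rbar_lt x X ->
     ex_derive u x /\ ex_derive (Derive u) x /\ 0 < u x /\
     Derive (Derive u) x = ode_rhs n x (u x) (Derive u x)).

Definition is_max_sol (n : nat) (sigma x0 : R) (X : Rbar) (u : R -> R) : Prop :=
  is_sol n sigma x0 X u /\
  forall (Y : Rbar) (v : R -> R), Rbar_lt X Y -> is_sol n sigma x0 Y v ->
    ~ (forall x, x0 <= x -> Rbar_lt x X -> v x = u x).

(* Main.v *)
Require Import Defs.
From Stdlib Require Import Reals Lra Psatz.
From Coquelicot Require Import Coquelicot.
Open Scope R_scope.

Lemma isd_eq (f : R -> R) (x l l' : R) : is_derive f x l -> l = l' -> is_derive f x l'.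
Proof. intros H ->; exact H. Qed.

Lemma isd_mult (f g : R -> R) x df dg : is_derive f x df -> is_derive g x dg ->
  is_derive (fun t => f t * g t) x (df * g x + f x * dg).
Proof. intros H1 H2. eapply isd_eq. apply (is_derive_mult f g x df dg H1 H2).
  intros; apply Rmult_comm. reflexivity. Qed.

Lemma isd_minus (f g : R -> R) x df dg : is_derive f x df -> is_derive g x dg ->
  is_derive (fun t => f t - g t) x (df - dg).
Proof. intros H1 H2. eapply isd_eq. apply (is_derive_minus f g x df dg H1 H2).
  reflexivity. Qed.

Lemma isd_plus (f g : R -> R) x df dg : is_derive f x df -> is_derive g x dg ->
  is_derive (fun t => f t + g t) x (df + dg).
Proof. intros H1 H2. eapply isd_eq. apply (is_derive_plus f g x df dg H1 H2).
  reflexivity. Qed.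

Lemma isd_id x : is_derive (fun t : R => t) x 1.
Proof. apply (@is_derive_id R_AbsRing). Qed.

Lemma isd_const (c : R) x : is_derive (fun _ => c) x 0.
Proof. apply (@is_derive_const R_AbsRing R_NormedModule c x). Qed.

Lemma decr (g dg : R -> R) a b : a <= b ->
  (forall x, a <= x <= b -> is_derive g x (dg x)) ->
  (forall x, a <= x <= b -> dg x <= 0) -> g b <= g a.
Proof.
  intros Hab Hd Hs.
  destruct (MVT_gen g a b dg) as [c [Hc E]].
  - intros x Hx. apply Hd. rewrite Rmin_left in Hx by lra. rewrite Rmax_right in Hx by lra. lra.
  - intros x Hx. rewrite Rmin_left in Hx by lra. rewrite Rmax_right in Hx by lra.
    apply continuity_pt_filterlim. apply (ex_derive_continuous g). eexists; apply Hd; lra.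
  - rewrite Rmin_left in Hc by lra. rewrite Rmax_right in Hc by lra.
    specialize (Hs c Hc). nra.
Qed.

Lemma nocross (f df : R -> R) x0 x1 : x0 <= x1 -> 0 <= f x0 ->
  (forall t, x0 <= t <= x1 -> is_derive f t (df t)) ->
  (forall t, x0 <= t <= x1 -> 0 <= f t -> 0 < df t) -> 0 <= f x1.
Proof.
  intros H01 Hf0 Hd Hp.
  destruct (Rle_or_lt 0 (f x1)) as [?|Hneg]; [assumption|exfalso].
  set (E := fun t => x0 <= t <= x1 /\ 0 <= f t).
  destruct (completeness E) as [c [Hub Hlub]].
  - exists x1. intros t [Ht _]; lra.
  - exists x0. split; [lra|assumption].
  assert (Hx0c : x0 <= c) by (apply Hub; split; [lra|assumption]).
  assert (Hcx1 : c <= x1) by (apply Hlub; intros t [Ht _]; lra).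
  assert (Hfc : 0 <= f c).
  { destruct (Rle_or_lt 0 (f c)) as [?|Hc]; [assumption|exfalso].
    assert (Hcont : continuity_pt f c).
    { apply continuity_pt_filterlim. apply (ex_derive_continuous f). eexists; apply Hd; lra. }
    destruct (Hcont (- f c)) as [d [Hd0 Hdd]]; [lra|].
    assert (Hb : is_upper_bound E (c - d / 2)).
    { intros t [Ht Hft]. destruct (Rle_or_lt t (c - d/2)) as [?|Hlt]; [assumption|exfalso].
      assert (t <= c) by (apply Hub; split; assumption).
      destruct (Req_dec t c) as [->|Hne]; [lra|].
      specialize (Hdd t). simpl in Hdd. unfold R_dist in Hdd.
      assert (Rabs (f t - f c) < - f c).
      { apply Hdd. split. split; [exact I|auto]. rewrite Rabs_left; lra. }
      rewrite Rabs_pos_eq in H0 by lra. lra. }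
    specialize (Hlub _ Hb). lra. }
  assert (Hcne : c < x1) by (destruct (Req_dec c x1) as [->|]; lra).
  assert (Hdc : 0 < df c) by (apply Hp; [lra|assumption]).
  pose proof (Hd c (conj Hx0c (Rlt_le _ _ Hcne))) as Hder.
  apply is_derive_Reals in Hder.
  destruct (Hder (df c) Hdc) as [d Hdd].
  set (h := Rmin (d/2) ((x1 - c)/2)).
  assert (Hh0 : 0 < h) by (unfold h; apply Rmin_pos; [destruct d; simpl; lra|lra]).
  assert (Hh1 : h <= (x1 - c)/2) by apply Rmin_r.
  assert (Hh2 : h < d) by (unfold h; pose proof (Rmin_l (d/2) ((x1-c)/2)); destruct d; simpl in *; lra).
  specialize (Hdd h (Rgt_not_eq _ _ Hh0)).
  assert (Habs : Rabs h < d) by (rewrite Rabs_pos_eq; lra).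
  specialize (Hdd Habs).
  apply Rabs_def2 in Hdd. destruct Hdd as [_ Hlo].
  assert (Hq : 0 < (f (c + h) - f c) / h) by lra.
  assert (0 < f (c + h) - f c).
  { apply (Rmult_lt_compat_r h) in Hq; [|lra]. unfold Rdiv in Hq.
    rewrite Rmult_assoc, Rinv_l, Rmult_1_r in Hq by lra. lra. }
  assert (c + h <= c) by (apply Hub; split; [lra|lra]). lra.
Qed.

Theorem lemma1 (n : nat) (sigma x0 : R) (X : Rbar) (u : R -> R) :
  (2 <= n)%nat -> 0 < sigma -> 0 < x0 ->
  is_max_sol n sigma x0 X u ->
  is_finite X /\
  (sqrt (2 * (INR n - 1)) <= u x0 ->
     Rbar_le X (Finite ((1 + 1 / (INR n - 1)) * x0))).
Proof.
  intros Hn Hsig Hx0 [[HX [Hu0 [Hp0 Hsol]]] _].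
  set (p := Derive u). set (q := Derive p). set (N := INR n - 1).
  assert (HN : 1 <= N) by (unfold N; apply le_INR in Hn; simpl in Hn; lra).
  set (D := fun t => x0 <= t /\ Rbar_lt t X).
  assert (Hdu : forall t, D t -> is_derive u t (p t))
    by (intros t [H1 H2]; apply Derive_correct, (Hsol t H1 H2)).
  assert (Hdp : forall t, D t -> is_derive p t (q t))
    by (intros t [H1 H2]; apply Derive_correct, (Hsol t H1 H2)).
  assert (Hpos : forall t, D t -> 0 < u t) by (intros t [H1 H2]; apply (Hsol t H1 H2)).
  assert (Hq : forall t, D t -> q t = ((t * p t - u t) / 2 + N / u t) * (1 + p t ^ 2)).
  { intros t [H1 H2]. destruct (Hsol t H1 H2) as [_ [_ [Hut E]]].
    unfold q, p. rewrite E. unfold ode_rhs, N. field. lra. }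
  assert (Dsub : forall t s, D s -> x0 <= t <= s -> D t).
  { intros t s [H1 H2] Ht. split; [lra|]. eapply Rbar_le_lt_trans; [|exact H2]. simpl; lra. }
  assert (Hf : forall t, D t -> 0 <= t * p t - u t).
  { intros x Dx.
    apply (nocross (fun t => t * p t - u t) (fun t => t * q t) x0 x).
    - apply Dx.
    - unfold p. rewrite Hu0. nra.
    - intros t Ht. assert (Dt : D t) by (eapply Dsub; eauto).
      eapply isd_eq. apply isd_minus. apply isd_mult. apply isd_id. apply (Hdp t Dt).
      apply (Hdu t Dt). cbv beta; ring.
    - intros t Ht Hft. assert (Dt : D t) by (eapply Dsub; eauto).
      rewrite (Hq t Dt). pose proof (Hpos t Dt).
      assert (0 < N / u t) by (apply Rdiv_lt_0_compat; lra).
      assert (0 < 1 + p t ^ 2) by (pose proof (pow2_ge_0 (p t)); lra).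
      apply Rmult_lt_0_compat; [lra|]. apply Rmult_lt_0_compat; lra. }
  assert (Hpp : forall t, D t -> 0 < p t).
  { intros t Dt. pose proof (Hf t Dt). pose proof (Hpos t Dt).
    destruct Dt. nra. }
  assert (Hqp : forall t, D t -> 0 < q t).
  { intros t Dt. rewrite (Hq t Dt). pose proof (Hpos t Dt). pose proof (Hf t Dt).
    assert (0 < N / u t) by (apply Rdiv_lt_0_compat; lra).
    assert (0 < 1 + p t ^ 2) by (pose proof (pow2_ge_0 (p t)); lra).
    apply Rmult_lt_0_compat; lra. }
  assert (DX0 : D x0) by (split; [lra|exact HX]).
  assert (Hps : forall t, D t -> sigma <= p t).
  { intros x Dx.
    assert (H := decr (fun t => 0 - p t) (fun t => 0 - q t) x0 x (proj1 Dx)).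
    simpl in H. cut (0 - p x <= 0 - p x0). unfold p; lra.
    apply H. intros t Ht. apply isd_minus. apply isd_const. apply Hdp. eapply Dsub; eauto.
    intros t Ht. pose proof (Hqp t ltac:(eapply Dsub; eauto)). lra. }
  assert (Hug : forall t, D t -> u x0 + sigma * (t - x0) <= u t).
  { intros x Dx.
    assert (H := decr (fun t => sigma * t - u t) (fun t => sigma * 1 - p t) x0 x (proj1 Dx)).
    cut (sigma * x - u x <= sigma * x0 - u x0). lra.
    apply H. intros t Ht. apply isd_minus. 
    apply (is_derive_scal (fun t => t)). apply isd_id.
    apply Hdu. eapply Dsub; eauto.
    intros t Ht. pose proof (Hps t ltac:(eapply Dsub; eauto)). lra. }
  assert (Core : forall a, D a -> sqrt (2 * N) <= u a -> Rbar_lt ((1 + 1 / N) * a) X -> False).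
  { intros a Da Hsa Hb. set (b := (1 + 1/N) * a).
    assert (Ha : 0 < a) by (destruct Da; lra).
    assert (Hab : a <= b) by (unfold b; assert (0 < 1/N) by (apply Rdiv_lt_0_compat; lra); nra).
    assert (Db : D b) by (split; [destruct Da; lra| exact Hb]).
    assert (Dab : forall t, a <= t <= b -> D t) by (intros t Ht; eapply Dsub; [exact Db|destruct Da; lra]).
    assert (Hus : forall t, a <= t <= b -> 2 * N <= u t ^ 2).
    { intros x Hx.
      assert (H := decr (fun t => 0 - u t) (fun t => 0 - p t) a x (proj1 Hx)).
      assert (u a <= u x).
      { cut (0 - u x <= 0 - u a). lra. apply H.
        intros t Ht. apply isd_minus. apply isd_const. apply Hdu, Dab; lra.
        intros t Ht. pose proof (Hpp t ltac:(apply Dab; lra)). lra. }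
      pose proof (sqrt_pos (2 * N)). pose proof (sqrt_sqrt (2*N) ltac:(lra)). nra. }
    set (v := fun t => u t / p t).
    set (dv := fun t => (p t * p t - u t * q t) / p t ^ 2).
    assert (Hdv : forall t, a <= t <= b -> is_derive v t (dv t)).
    { intros t Ht. apply is_derive_div. apply Hdu, Dab; auto. apply Hdp, Dab; auto.
      pose proof (Hpp t ltac:(apply Dab; auto)). lra. }
    assert (Huq : forall t, a <= t <= b -> u t * q t = (u t * (t * p t - u t) / 2 + N) * (1 + p t ^ 2)).
    { intros t Ht. rewrite (Hq t (Dab t Ht)). field. pose proof (Hpos t (Dab t Ht)). lra. }
    assert (Hdvn : forall t, a <= t <= b -> dv t <= 0).
    { intros t Ht. unfold dv. pose proof (Huq t Ht) as E. pose proof (Hf t (Dab t Ht)).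
      pose proof (Hpos t (Dab t Ht)). pose proof (Hpp t (Dab t Ht)).
      assert (u t * (t * p t - u t) >= 0) by nra.
      assert (p t * p t - u t * q t <= 0).
      { rewrite E. pose proof (pow2_ge_0 (p t)). nra. }
      unfold Rdiv. apply Rmult_le_0_r. lra. apply Rlt_le, Rinv_0_lt_compat. nra. }
    assert (Hva : v a <= a).
    { unfold v. pose proof (Hf a Da). pose proof (Hpp a Da).
      apply Rmult_le_reg_r with (p a); [lra|]. unfold Rdiv. rewrite Rmult_assoc, Rinv_l; lra. }
    assert (Hvle : forall t, a <= t <= b -> v t <= a).
    { intros x Hx. assert (H := decr v dv a x (proj1 Hx)).
      cut (v x <= v a). lra. apply H.
      intros t Ht; apply Hdv; lra. intros t Ht; apply Hdvn; lra. }
    assert (Hvp : forall t, a <= t <= b -> 0 < v t).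
    { intros t Ht. unfold v. apply Rdiv_lt_0_compat; [apply Hpos|apply Hpp]; apply Dab; auto. }
    set (H := fun t => v t * v t - (2 * a) * t + N * (t * t)).
    set (dH := fun t => (dv t * v t + v t * dv t) - ((2*a) * 1) + N * (1 * t + t * 1)).
    assert (Hmon : H b <= H a).
    { apply (decr H dH a b Hab).
      - intros t Ht. unfold H, dH. apply isd_plus. apply isd_minus.
        apply isd_mult; apply Hdv; auto.
        eapply isd_eq. apply isd_mult. apply isd_const. apply isd_id. cbv beta; ring.
        eapply isd_eq. apply isd_mult. apply isd_const. apply isd_mult; apply isd_id. cbv beta; ring.
      - intros t Ht. unfold dH.
        assert (Key : v t * dv t <= v t - N * t).
        { pose proof (Huq t Ht) as E. pose proof (Hf t (Dab t Ht)) as Ft.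
          pose proof (Hpos t (Dab t Ht)) as Ut. pose proof (Hpp t (Dab t Ht)) as Pt.
          pose proof (Hus t Ht) as St.
          assert (E2 : v t * dv t = v t - u t * (u t * q t) / p t ^ 3).
          { unfold v, dv. field. lra. }
          rewrite E2.
          assert (K1 : u t * (u t * (t * p t - u t) / 2 + N) - N * t * p t
                       = (t * p t - u t) * (u t ^ 2 / 2 - N)) by field.
          assert (K2 : N * t * p t <= u t * (u t * (t * p t - u t) / 2 + N)).
          { assert (0 <= (t * p t - u t) * (u t ^ 2 / 2 - N)) by (apply Rmult_le_pos; lra). lra. }
          assert (K3 : N * t * p t ^ 3 <= u t * (u t * q t)).
          { rewrite E. assert (0 <= N * t * p t) by (destruct Ht; nra).
            pose proof (pow2_ge_0 (p t)).
            replace (u t * ((u t * (t * p t - u t) / 2 + N) * (1 + p t ^ 2)))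
              with ((u t * (u t * (t * p t - u t) / 2 + N)) * (1 + p t ^ 2)) by ring.
            replace (N * t * p t ^ 3) with ((N * t * p t) * p t ^ 2) by ring.
            apply Rle_trans with ((N * t * p t) * (1 + p t ^ 2)). nra.
            apply Rmult_le_compat_r; lra. }
          assert (0 < p t ^ 3) by (apply pow_lt; lra).
          assert (N * t <= u t * (u t * q t) / p t ^ 3).
          { apply Rmult_le_reg_r with (p t ^ 3); [lra|].
            replace (u t * (u t * q t) / p t ^ 3 * p t ^ 3) with (u t * (u t * q t)) by (field; lra). lra. }
          lra. }
        pose proof (Hvle t Ht). lra. }
    unfold H in Hmon.
    pose proof (Hvp b (conj Hab (Rle_refl b))). pose proof (Hvp a (conj (Rle_refl a) Hab)).
    assert (E : 2 * a * b - N * (b * b) = a * a * (1 / N - N)) by (unfold b; field; lra).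
    assert (a * a * (1 / N - 1) <= 0).
    { assert (1 / N <= 1). { apply Rmult_le_reg_r with N; [lra|]. unfold Rdiv. rewrite Rmult_assoc, Rinv_l; lra. }
      nra. }
    nra. }
  split.
  - destruct X as [x| |]; [reflexivity| |destruct HX].
    exfalso. set (a := x0 + sqrt (2 * N) / sigma).
    assert (0 <= sqrt (2 * N) / sigma) by (apply Rdiv_le_0_compat; [apply sqrt_pos|lra]).
    assert (Da : D a) by (split; [unfold a; lra|exact I]).
    apply (Core a Da); [|exact I].
    pose proof (Hug a Da). unfold a in *.
    assert (sigma * (sqrt (2 * N) / sigma) = sqrt (2 * N)) by (field; lra).
    rewrite Hu0 in *. nra.
  - intros Hs0. destruct X as [x| |]; [| |destruct HX].
    + simpl. destruct (Rle_or_lt x ((1 + 1 / N) * x0)) as [?|Hlt]; [assumption|].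
      exfalso. apply (Core x0 DX0 Hs0). exact Hlt.
    + exfalso. apply (Core x0 DX0 Hs0). exact I.
Qed.
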